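(* Let $\varepsilon_+(C,C_D)$ and $\lambda_+(C_D)$ be as defined in the context. Then: (i) If $B>1+\beta+\delta$: $\lambda_+(C_D)>0$ for every $C_D>0$, and $\varepsilon_+(C,C_D)>0$ for every $(C,C_D)\in[0,\infty)^2\setminus\{(0,0)\}$; thus every equilibrium $(0,0,C_D,0,0,D)$ with $C_D>0$ and every equilibrium $(C,0,C_D,0,0,0)$ with $(C,C_D)\ne(0,0)$ has a positive real Jacobian eigenvalue (is unstable). (ii) If $1+\beta<B<1+\beta+\delta$: $\lambda_+(C_D)<0$ for every $C_D>0$; and for $C,C_D\ge0$ with $C_D>0$, $\varepsilon_+(C,C_D)<0$ if $$\frac{C}{C_D}<\frac{1-\frac{B}{1+\beta+\delta}}{\frac{B}{1+\beta}-1},$$ while $\varepsilon_+(C,C_D)>0$ if the reverse strict inequality holds (and $\varepsilon_+(C,0)>0$ for $C>0$). (iii) If $0<B<1+\beta$: $\lambda_+(C_D)<0$ for every $C_D>0$ and $\varepsilon_+(C,C_D)<0$ for every $(C,C_D)\in[0,\infty)^2\setminus\{(0,0)\}$. In all cases, at every point of $\{(0,0,0,0,V,D):V,D\ge0,(V,D)\ne(0,0)\}$ all Jacobian eigenvalues are non-positive.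
   Context: Consider the autonomous system of ODEs in the state variables $(C,C_V,C_D,C_{DV},V,D)\in\mathbb{R}^6$: $\dot C=-\iota C(V+D)$, $\dot C_V=\iota CV-C_V(\iota D+\alpha)$, $\dot C_D=\iota(CD-C_DV)$, $\dot C_{DV}=\iota(C_DV+C_VD)-\alpha C_{DV}$, $\dot V=\alpha\eta\left(C_V+\frac{C_{DV}}{\kappa}\right)-\iota V(C+C_D)$, $\dot D=\alpha\beta\eta\left(C_V+\frac{C_{DV}}{\kappa}\right)+\alpha\delta\eta\frac{C_{DV}}{\kappa}-\iota D(C+C_V)$, where $B>0$, $\beta\in[0,1]$, $\delta>1$, $\iota>0$, $\alpha>0$, $\eta=\frac{B}{1+\beta}$, $\kappa=1+\frac{\delta}{1+\beta}$. Define $\varepsilon_+(C,C_D)=-\frac{\iota(C+C_D)+\alpha}{2}+\frac12\sqrt{4\alpha C\eta\iota+(\iota(C+C_D)-\alpha)^2+\frac{4\alpha C_D\eta\iota}{\kappa}}$ (the largest non-trivial Jacobian eigenvalue at the equilibrium $(C,0,C_D,0,0,0)$) and $\lambda_+(C_D)=-\frac{\iota C_D+\alpha}{2}+\frac12\sqrt{(\iota C_D-\alpha)^2+\frac{4\alpha C_D\eta\iota}{\kappa}}$ (the largest non-trivial Jacobian eigenvalue at the equilibrium $(0,0,C_D,0,0,D)$). *)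

(* Defs.v *)
From mathcomp Require Import all_boot all_order all_algebra.
From mathcomp Require Import all_classical all_reals all_analysis.
From mathcomp Require Import complex.
Set Implicit Arguments. Unset Strict Implicit. Unset Printing Implicit Defensive.
Import Order.TTheory GRing.Theory Num.Theory.
Local Open Scope ring_scope.

Section Model.
Variable R : realType.

Definition eta_ (B beta : R) : R := B / (1 + beta).
Definition kappa_ (beta delta : R) : R := 1 + delta / (1 + beta).

Definition pt6 (a b c d e f : R) : 'rV[R]_6 :=
  \row_(i < 6) nth 0 [:: a; b; c; d; e; f] i.

(* k-th coordinate (k = 0..5) of a state x = (C, C_V, C_D, C_DV, V, D) *)
Definition coord6 (x : 'rV[R]_6) (k : nat) : R := x ord0 (inord k).

Definition odeF (B beta delta iota alpha : R) (x : 'rV[R]_6) : 'rV[R]_6 :=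
  let C := coord6 x 0 in
  let CV := coord6 x 1 in
  let CD := coord6 x 2 in
  let CDV := coord6 x 3 in
  let V := coord6 x 4 in
  let D := coord6 x 5 in
  let eta := eta_ B beta in
  let kappa := kappa_ beta delta in
  pt6 (- iota * C * (V + D))
      (iota * C * V - CV * (iota * D + alpha))
      (iota * (C * D - CD * V))
      (iota * (CD * V + CV * D) - alpha * CDV)
      (alpha * eta * (CV + CDV / kappa) - iota * V * (C + CD))
      (alpha * beta * eta * (CV + CDV / kappa) + alpha * delta * eta * (CDV / kappa)
         - iota * D * (C + CV)).

Definition jac (f : 'rV[R]_6 -> 'rV[R]_6) (x : 'rV[R]_6) : 'M[R]_6 :=
  \matrix_(i < 6, j < 6) derive1 (fun t : R => f (x + t *: delta_mx 0 j) ord0 i) 0.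

Definition eps_plus (B beta delta iota alpha : R) (C CD : R) : R :=
  let eta := eta_ B beta in
  let kappa := kappa_ beta delta in
  - (iota * (C + CD) + alpha) / 2
  + Num.sqrt (4 * alpha * C * eta * iota + (iota * (C + CD) - alpha) ^+ 2
              + 4 * alpha * CD * eta * iota / kappa) / 2.

Definition lam_plus (B beta delta iota alpha : R) (CD : R) : R :=
  let eta := eta_ B beta in
  let kappa := kappa_ beta delta in
  - (iota * CD + alpha) / 2
  + Num.sqrt ((iota * CD - alpha) ^+ 2 + 4 * alpha * CD * eta * iota / kappa) / 2.

Definition complex_eigenvalue (A : 'M[R]_6) (z : R[i]) : bool :=
  root (char_poly (map_mx (real_complex R) A)) z.

End Model.

(* Main.v *)
Require Import Defs.
From mathcomp Require Import all_boot all_order all_algebra.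
From mathcomp Require Import all_classical all_reals all_analysis.
From mathcomp Require Import complex.
Import Order.TTheory GRing.Theory Num.Theory.
Local Open Scope ring_scope.
From mathcomp Require Import ring lra.

Lemma deriv_quad (R : realType) (g : R -> R) (b : R) :
  (forall t, g t = g 0 + b * t + (g 1 - g 0 - b) * t ^+ 2) -> derive1 g 0 = b.
Proof.
move=> H.
have -> : g = horner ((g 0)%:P + b *: 'X + (g 1 - g 0 - b) *: 'X^2).
  apply/funext => t; rewrite {1}H. rewrite !(hornerD, hornerZ, hornerC, hornerX, hornerXn). ring.
rewrite -(derivE (R:=R)).
rewrite !(derivD, derivZ, derivC, derivX, derivXn) !(hornerD, hornerZ, hornerC, hornerX, hornerXn, hornerMn).
rewrite /= expr1; ring.
Qed.

Lemma coordP (R : realType) (x : 'rV[R]_6) (t : R) (j : 'I_6) (k : nat) :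
  (k < 6)%N -> coord6 (x + t *: delta_mx 0 j) k = coord6 x k + t * (k == j)%:R.
Proof.
move=> Hk; rewrite /coord6 !mxE eqxx /= -(inj_eq val_inj) /= inordK //.

Qed.

Definition Jent (R : realType) (B beta delta iota alpha : R) (x : 'rV[R]_6) (i j : nat) : R :=
  let C := coord6 x 0 in
  let CV := coord6 x 1 in
  let CD := coord6 x 2 in
  let CDV := coord6 x 3 in
  let V := coord6 x 4 in
  let D := coord6 x 5 in
  let eta := eta_ B beta in
  let kappa := kappa_ beta delta in
  nth 0 (nth [::] [::
   [:: - iota * (V + D); 0; 0; 0; - iota * C; - iota * C];
   [:: iota * V; - (iota * D + alpha); 0; 0; iota * C; - iota * CV];
   [:: iota * D; 0; - iota * V; 0; - iota * CD; iota * C];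
   [:: 0; iota * D; iota * V; - alpha; iota * CD; iota * CV];
   [:: - iota * V; alpha * eta; - iota * V; alpha * eta / kappa; - iota * (C + CD); 0];
   [:: - iota * D; alpha * beta * eta - iota * D; 0;
       alpha * beta * eta / kappa + alpha * delta * eta / kappa; 0; - iota * (C + CV)]] i) j.

Arguments Jent {R}.
Lemma jacE (R : realType) (B beta delta iota alpha : R) (x : 'rV[R]_6) (i j : 'I_6) :
  jac (odeF B beta delta iota alpha) x i j = Jent B beta delta iota alpha x i j.
Proof.
rewrite /jac mxE; apply: deriv_quad => t.
rewrite /odeF /pt6 !mxE !coordP //.
case: i => [[|[|[|[|[|[|?]]]]]] //= Hi];
case: j => [[|[|[|[|[|[|?]]]]]] //= Hj]; rewrite /Jent /=; ring.
Qed.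

Lemma coord_pt6 (R : realType) (a b c d e f : R) (k : nat) : (k < 6)%N ->
  coord6 (pt6 a b c d e f) k = nth 0 [:: a; b; c; d; e; f] k.
Proof. by move=> Hk; rewrite /coord6 /pt6 mxE inordK. Qed.

Lemma eq_of_comb {R : realType} {h a b : R} : h = 0 -> a - b = - h -> a = b.
Proof. by move=> -> /eqP; rewrite oppr0 subr_eq0 => /eqP. Qed.

Lemma eig1 (R : realType) (B beta delta iota alpha CD D mu : R) :
  0 < B -> 0 <= beta -> 1 < delta -> 0 < iota -> 0 < alpha -> 0 < CD -> 0 <= D -> 0 < mu ->
  kappa_ beta delta * (mu ^+ 2 + (alpha + iota * CD) * mu + alpha * iota * CD)
    - iota * CD * alpha * eta_ B beta = 0 ->
  eigenvalue (jac (odeF B beta delta iota alpha) (pt6 0 0 CD 0 0 D)) mu.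
Proof.
move=> HB Hb Hd Hi Ha HCD HD Hmu Hq.
have Hk : 0 < kappa_ beta delta.
  rewrite /kappa_; have : 0 <= delta / (1 + beta) by apply: divr_ge0; lra.
  lra.
apply/eigenvalueP.
set k := kappa_ beta delta. set e := eta_ B beta.
exists (pt6 0 ((iota * D * alpha * e + alpha * e * (mu + alpha) * k) / (mu + iota * D + alpha)) 0 (alpha * e) ((mu + alpha) * k) 0).
  apply/rowP => j; rewrite !mxE.
  rewrite !big_ord_recl big_ord0 /=.
  rewrite !jacE /Jent /= !coord_pt6 //= /pt6 !mxE /=.
  case: j => [[|[|[|[|[|[|?]]]]]] //= Hj]. all: rewrite ?mul0r ?mulr0 ?addr0 ?add0r. all: try done.
  - have HiD : 0 <= iota * D by apply: mulr_ge0; lra.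
    rewrite /k /e; field; apply: lt0r_neq0; lra.
  - rewrite /k /e; field; exact: lt0r_neq0.
  - apply/eqP; rewrite -subr_eq0; apply/eqP; rewrite -oppr0 -Hq /k /e; ring.
have He : 0 < e by rewrite /e /eta_; apply: divr_gt0; lra.
apply/eqP => H; have := congr1 (fun v : 'rV[R]_6 => v ord0 (inord 3)) H.
rewrite /pt6 !mxE inordK //= => /eqP; rewrite mulf_eq0; apply/negP; rewrite negb_or; apply/andP; split; apply: lt0r_neq0; lra.
Qed.

Lemma eig2 (R : realType) (B beta delta iota alpha C CD mu : R) :
  0 < B -> 0 <= beta -> 1 < delta -> 0 < iota -> 0 < alpha -> 0 < mu ->
  kappa_ beta delta * (mu ^+ 2 + (alpha + iota * (C + CD)) * mu + alpha * iota * (C + CD))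
    - alpha * eta_ B beta * iota * (kappa_ beta delta * C + CD) = 0 ->
  eigenvalue (jac (odeF B beta delta iota alpha) (pt6 C 0 CD 0 0 0)) mu.
Proof.
move=> HB Hb Hd Hi Ha Hmu Hq.
have Hk : 0 < kappa_ beta delta.
  rewrite /kappa_; have : 0 <= delta / (1 + beta) by apply: divr_ge0; lra.
  lra.
apply/eigenvalueP.
set k := kappa_ beta delta. set e := eta_ B beta.
exists (pt6 0 (alpha * e * k) 0 (alpha * e) ((mu + alpha) * k) 0).
  apply/rowP => j; rewrite !mxE.
  rewrite !big_ord_recl big_ord0 /=.
  rewrite !jacE /Jent /= !coord_pt6 //= /pt6 !mxE /=.
  case: j => [[|[|[|[|[|[|?]]]]]] //= Hj]. all: rewrite ?mul0r ?mulr0 ?addr0 ?add0r. all: try done.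
  all: try (rewrite /k /e; ring).
  all: try (rewrite /k /e; field; exact: (lt0r_neq0 Hk)).
  apply: (eq_of_comb Hq); rewrite /k /e; ring.
have He : 0 < e by rewrite /e /eta_; apply: divr_gt0; lra.
apply/eqP => H; have := congr1 (fun v : 'rV[R]_6 => v ord0 (inord 3)) H.
rewrite /pt6 !mxE inordK //= => /eqP; rewrite mulf_eq0; apply/negP; rewrite negb_or; apply/andP; split; apply: lt0r_neq0; lra.
Qed.

Lemma lastpart (R : realType) (B beta delta iota alpha V D : R) :
  0 < iota -> 0 < alpha -> 0 <= V -> 0 <= D ->
  forall z : R[i], complex_eigenvalue (jac (odeF B beta delta iota alpha) (pt6 0 0 0 0 V D)) z -> z <= 0.
Proof.
move=> Hi Ha HV HD z.
rewrite /complex_eigenvalue char_poly_trig; last first.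
  apply/is_trig_mxP => i j Hij; rewrite mxE jacE /Jent /= !coord_pt6 //=.
  case: i Hij => [[|[|[|[|[|[|?]]]]]] //= Hi'];
  case: j => [[|[|[|[|[|[|?]]]]]] //= Hj] _; by rewrite mulr0.
under eq_bigr => i _ do rewrite mxE jacE.
rewrite !big_ord_recr big_ord0 /= mul1r !rootM !root_XsubC /Jent /= !coord_pt6 //=.
repeat case/orP; move/eqP ->; rewrite lecE /= eqxx /=; nra.
Qed.

Section Q.
Variable R : realType.
Implicit Types b c d : R.

Lemma quad_root b c d : d = b ^+ 2 - 4 * c -> 0 <= d ->
  let mu := - b / 2 + Num.sqrt d / 2 in mu ^+ 2 + b * mu + c = 0.
Proof.
move=> Hd Hd0 mu; have := sqr_sqrtr Hd0; rewrite /mu => Hs.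
have -> : c = (b ^+ 2 - d) / 4 by rewrite Hd; by field.
rewrite -{3}Hs; by field.
Qed.

Lemma quad_pos b c d : 0 < b -> d = b ^+ 2 - 4 * c -> c < 0 -> 0 < - b / 2 + Num.sqrt d / 2.
Proof.
move=> Hb Hd Hc.
have Hd0 : 0 <= d by rewrite Hd; nra.
have := sqr_sqrtr Hd0; have := sqrtr_ge0 d.
set s := Num.sqrt d => Hs0 Hs.
have : b < s by nra.
lra.
Qed.

Lemma quad_neg b c d : 0 < b -> d = b ^+ 2 - 4 * c -> 0 <= d -> 0 < c -> - b / 2 + Num.sqrt d / 2 < 0.
Proof.
move=> Hb Hd Hd0 Hc.
have := sqr_sqrtr Hd0; have := sqrtr_ge0 d.
set s := Num.sqrt d => Hs0 Hs.
have : s < b by nra.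
lra.
Qed.


Lemma k_pos (beta delta : R) : 0 <= beta -> 1 < delta -> 0 < kappa_ beta delta.
Proof. move=> Hb0 Hd. rewrite /kappa_; have : 0 <= delta / (1 + beta) by apply: divr_ge0; lra. lra. Qed.

Lemma e_pos (B beta : R) : 0 < B -> 0 <= beta -> 0 < eta_ B beta.
Proof. move=> HB Hb0. rewrite /eta_; apply: divr_gt0; lra. Qed.

Lemma e_sub1 (B beta : R) : 0 <= beta -> eta_ B beta - 1 = (B - (1 + beta)) / (1 + beta).
Proof. move=> Hb0. rewrite /eta_; field; apply: lt0r_neq0; lra. Qed.

Lemma ek (B beta delta : R) : 0 <= beta -> 1 < delta -> eta_ B beta / kappa_ beta delta = B / (1 + beta + delta).
Proof. move=> Hb0 Hd.
rewrite /eta_ /kappa_; field.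
have H1 : 1 + beta != 0 by apply: lt0r_neq0; lra.
have H2 : 1 + beta + delta != 0 by apply: lt0r_neq0; lra.
by rewrite H1 H2.
Qed.
End Q.

Lemma lam_props (R : realType) (B beta delta iota alpha CD : R) :
  0 < B -> 0 <= beta -> 1 < delta -> 0 < iota -> 0 < alpha -> 0 < CD ->
  let c := alpha * iota * CD * (1 - eta_ B beta / kappa_ beta delta) in
  let mu := lam_plus B beta delta iota alpha CD in
  [/\ (c < 0 -> 0 < mu), (0 < c -> mu < 0) & mu ^+ 2 + (iota * CD + alpha) * mu + c = 0].
Proof.
move=> HB Hb0 Hd Hi Ha HCD.
have Hk : 0 < kappa_ beta delta by apply: k_pos.
have He : 0 < eta_ B beta by apply: e_pos.
have H4 : 0 <= 4 * alpha * CD * eta_ B beta * iota / kappa_ beta delta.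
  apply: divr_ge0; last exact: ltW. apply: mulr_ge0; last lra. apply: mulr_ge0; last exact: ltW. apply: mulr_ge0; last lra. apply: mulr_ge0; lra.
have Hd0 : 0 <= (iota * CD - alpha) ^+ 2 + 4 * alpha * CD * eta_ B beta * iota / kappa_ beta delta.
  have := sqr_ge0 (iota * CD - alpha). lra.
have Hb : 0 < iota * CD + alpha by have := mulr_gt0 Hi HCD; lra.
move=> c mu.
have Hdd : (iota * CD - alpha) ^+ 2 + 4 * alpha * CD * eta_ B beta * iota / kappa_ beta delta
   = (iota * CD + alpha) ^+ 2 - 4 * c by rewrite /c; ring.
rewrite /mu /lam_plus /=; split.
- by apply: quad_pos.
- by apply: quad_neg.
- exact: quad_root.
Qed.

Lemma eps_props (R : realType) (B beta delta iota alpha C CD : R) :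
  0 < B -> 0 <= beta -> 1 < delta -> 0 < iota -> 0 < alpha -> 0 <= C -> 0 <= CD ->
  let c := alpha * iota * (C * (1 - eta_ B beta) + CD * (1 - eta_ B beta / kappa_ beta delta)) in
  let mu := eps_plus B beta delta iota alpha C CD in
  [/\ (c < 0 -> 0 < mu), (0 < c -> mu < 0) & mu ^+ 2 + (iota * (C + CD) + alpha) * mu + c = 0].
Proof.
move=> HB Hb0 Hd Hi Ha HC HCD.
have Hk : 0 < kappa_ beta delta by apply: k_pos.
have He : 0 < eta_ B beta by apply: e_pos.
have H4 : 0 <= 4 * alpha * CD * eta_ B beta * iota / kappa_ beta delta.
  apply: divr_ge0; last exact: ltW. apply: mulr_ge0; last lra. apply: mulr_ge0; last exact: ltW. apply: mulr_ge0; last lra. apply: mulr_ge0; lra.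
have H5 : 0 <= 4 * alpha * C * eta_ B beta * iota.
  apply: mulr_ge0; last lra. apply: mulr_ge0; last exact: ltW. apply: mulr_ge0; last lra. apply: mulr_ge0; lra.
have Hd0 : 0 <= 4 * alpha * C * eta_ B beta * iota + (iota * (C + CD) - alpha) ^+ 2
     + 4 * alpha * CD * eta_ B beta * iota / kappa_ beta delta.
  have := sqr_ge0 (iota * (C + CD) - alpha). lra.
have Hb : 0 < iota * (C + CD) + alpha by have := mulr_ge0 (ltW Hi) (addr_ge0 HC HCD); lra.
move=> c mu.
have Hdd : 4 * alpha * C * eta_ B beta * iota + (iota * (C + CD) - alpha) ^+ 2
     + 4 * alpha * CD * eta_ B beta * iota / kappa_ beta delta
   = (iota * (C + CD) + alpha) ^+ 2 - 4 * c by rewrite /c; ring.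
rewrite /mu /eps_plus /=; split.
- by apply: quad_pos.
- by apply: quad_neg.
- exact: quad_root.
Qed.

Lemma lt0_or {R : realType} {C CD : R} : 0 <= C -> 0 <= CD -> (C, CD) <> (0, 0) -> 0 < C \/ 0 < CD.
Proof.
move=> HC HCD Hne; case: (eqVneq C 0) => [HC0|HC0].
- right; rewrite lt0r HCD andbT; apply/eqP => H; apply: Hne; by rewrite HC0 H.
- left; by rewrite lt0r HC0 HC.
Qed.

Theorem mainTheorem8 (R : realType) (B beta delta iota alpha : R) :
  0 < B -> 0 <= beta -> beta <= 1 -> 1 < delta -> 0 < iota -> 0 < alpha ->
  let F := odeF B beta delta iota alpha in
  let eps := eps_plus B beta delta iota alpha in
  let lam := lam_plus B beta delta iota alpha in
  (* (i) *)
  (1 + beta + delta < B ->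
     (forall CD : R, 0 < CD -> 0 < lam CD) /\
     (forall C CD : R, 0 <= C -> 0 <= CD -> (C, CD) <> (0, 0) -> 0 < eps C CD) /\
     (forall CD D : R, 0 < CD -> 0 <= D ->
        exists mu : R, 0 < mu /\ eigenvalue (jac F (pt6 0 0 CD 0 0 D)) mu) /\
     (forall C CD : R, 0 <= C -> 0 <= CD -> (C, CD) <> (0, 0) ->
        exists mu : R, 0 < mu /\ eigenvalue (jac F (pt6 C 0 CD 0 0 0)) mu)) /\
  (* (ii) *)
  (1 + beta < B -> B < 1 + beta + delta ->
     (forall CD : R, 0 < CD -> lam CD < 0) /\
     (forall C CD : R, 0 <= C -> 0 < CD ->
        C / CD < (1 - B / (1 + beta + delta)) / (B / (1 + beta) - 1) -> eps C CD < 0) /\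
     (forall C CD : R, 0 <= C -> 0 < CD ->
        (1 - B / (1 + beta + delta)) / (B / (1 + beta) - 1) < C / CD -> 0 < eps C CD) /\
     (forall C : R, 0 < C -> 0 < eps C 0)) /\
  (* (iii) *)
  (B < 1 + beta ->
     (forall CD : R, 0 < CD -> lam CD < 0) /\
     (forall C CD : R, 0 <= C -> 0 <= CD -> (C, CD) <> (0, 0) -> eps C CD < 0)) /\
  (* all cases: at (0,0,0,0,V,D) all (complex) Jacobian eigenvalues are real and <= 0 *)
  (forall V D : R, 0 <= V -> 0 <= D -> (V, D) <> (0, 0) ->
     forall z : R[i], complex_eigenvalue (jac F (pt6 0 0 0 0 V D)) z -> z <= 0).
Proof.
move=> HB Hb0 Hb1 Hd Hi Ha F eps lam.
rewrite /F /eps /lam; clear F eps lam.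
have Hk : 0 < kappa_ beta delta by apply: k_pos.
have He : 0 < eta_ B beta by apply: e_pos.
have Hp : eta_ B beta - 1 = (B - (1 + beta)) / (1 + beta) by apply: e_sub1.
have Hq : eta_ B beta / kappa_ beta delta = B / (1 + beta + delta) by apply: ek.
have Hai : 0 < alpha * iota by apply: mulr_gt0.
have Hk0 : kappa_ beta delta != 0 by apply: lt0r_neq0.
split; [|split; [|split]].
-
  move=> HB3.
  have Hp0 : 0 < eta_ B beta - 1 by rewrite Hp; apply: divr_gt0; lra.
  have Hq0 : 1 - eta_ B beta / kappa_ beta delta < 0.
    have : 1 < B / (1 + beta + delta) by rewrite ltr_pdivlMr; lra.
    lra.
  have Hlam : forall CD, 0 < CD -> 0 < lam_plus B beta delta iota alpha CD.
    move=> CD HCD; have := @lam_props R B beta delta iota alpha CD HB Hb0 Hd Hi Ha HCD.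
    move=> /= -[H1 _ _]; apply: H1.
    have := mulr_gt0 Hai HCD; nra.
  have Heps : forall C CD, 0 <= C -> 0 <= CD -> (C, CD) <> (0, 0) ->
      0 < eps_plus B beta delta iota alpha C CD.
    move=> C CD HC HCD Hne; have := @eps_props R B beta delta iota alpha C CD HB Hb0 Hd Hi Ha HC HCD.
    move=> /= -[H1 _ _]; apply: H1.
    have Hs : C * (1 - eta_ B beta) + CD * (1 - eta_ B beta / kappa_ beta delta) < 0.
      by case: (lt0_or HC HCD Hne) => H; nra.
    nra.
  split; [exact: Hlam|split; [exact: Heps|split]].
  + move=> CD D HCD HD; exists (lam_plus B beta delta iota alpha CD); split; first exact: Hlam.
    apply: eig1 => //; first exact: Hlam.
    have := @lam_props R B beta delta iota alpha CD HB Hb0 Hd Hi Ha HCD.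
    move=> /= -[_ _ H3].
    set mu := lam_plus B beta delta iota alpha CD in H3 *.
    rewrite -[RHS](mulr0 (kappa_ beta delta)) -H3; by field.
  + move=> C CD HC HCD Hne; exists (eps_plus B beta delta iota alpha C CD); split; first exact: Heps.
    apply: eig2 => //; first exact: Heps.
    have := @eps_props R B beta delta iota alpha C CD HB Hb0 Hd Hi Ha HC HCD.
    move=> /= -[_ _ H3].
    set mu := eps_plus B beta delta iota alpha C CD in H3 *.
    rewrite -[RHS](mulr0 (kappa_ beta delta)) -H3; by field.
-
  move=> H1 H2.
  have Hp0 : 0 < eta_ B beta - 1 by rewrite Hp; apply: divr_gt0; lra.
  have Hq0 : 0 < 1 - eta_ B beta / kappa_ beta delta.
    have : B / (1 + beta + delta) < 1 by rewrite ltr_pdivrMr; lra.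
    lra.
  have Hrat : (1 - B / (1 + beta + delta)) / (B / (1 + beta) - 1)
      = (1 - eta_ B beta / kappa_ beta delta) / (eta_ B beta - 1) by rewrite Hq.
  rewrite Hrat.
  split; [|split; [|split]].
  + move=> CD HCD; have := @lam_props R B beta delta iota alpha CD HB Hb0 Hd Hi Ha HCD.
    move=> /= -[_ H _]; apply: H.
    have := mulr_gt0 Hai HCD; nra.
  + move=> C CD HC HCD Hlt; have := @eps_props R B beta delta iota alpha C CD HB Hb0 Hd Hi Ha HC (ltW HCD).
    move=> /= -[_ H _]; apply: H.
    move: Hlt; rewrite ltr_pdivlMr // => Hlt.
    have HCr : C = C / CD * CD by field; apply: lt0r_neq0.
    have [r Hr] : exists r, r = C / CD by eexists.
    rewrite -Hr in Hlt HCr; rewrite HCr.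
    have -> : r * CD * (1 - eta_ B beta) + CD * (1 - eta_ B beta / kappa_ beta delta)
      = CD * ((1 - eta_ B beta / kappa_ beta delta) - r * (eta_ B beta - 1)) by ring.
    apply: mulr_gt0 => //; apply: mulr_gt0 => //; lra.
  + move=> C CD HC HCD Hlt; have := @eps_props R B beta delta iota alpha C CD HB Hb0 Hd Hi Ha HC (ltW HCD).
    move=> /= -[H _ _]; apply: H.
    move: Hlt; rewrite ltr_pdivrMr // => Hlt.
    have HCr : C = C / CD * CD by field; apply: lt0r_neq0.
    have [r Hr] : exists r, r = C / CD by eexists.
    rewrite -Hr in Hlt HCr; rewrite HCr.
    have -> : r * CD * (1 - eta_ B beta) + CD * (1 - eta_ B beta / kappa_ beta delta)
      = - (CD * (r * (eta_ B beta - 1) - (1 - eta_ B beta / kappa_ beta delta))) by ring.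
    have : 0 < CD * (r * (eta_ B beta - 1) - (1 - eta_ B beta / kappa_ beta delta)).
      apply: mulr_gt0 => //; lra.
    move=> H0; rewrite mulrN oppr_lt0; exact: mulr_gt0.
  + move=> C HC; have := @eps_props R B beta delta iota alpha C 0 HB Hb0 Hd Hi Ha (ltW HC) (lexx 0).
    move=> /= -[H _ _]; apply: H.
    rewrite mul0r addr0.
    have : 0 < C * (eta_ B beta - 1) by apply: mulr_gt0.
    move=> H0; have -> : C * (1 - eta_ B beta) = - (C * (eta_ B beta - 1)) by ring.
    rewrite mulrN oppr_lt0; exact: mulr_gt0.
-
  move=> H1.
  have Hp0 : eta_ B beta - 1 < 0.
    have : B / (1 + beta) < 1 by rewrite ltr_pdivrMr; lra.
    rewrite /eta_; lra.
  have Hq0 : 0 < 1 - eta_ B beta / kappa_ beta delta.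
    have : B / (1 + beta + delta) < 1 by rewrite ltr_pdivrMr; lra.
    lra.
  split.
  + move=> CD HCD; have := @lam_props R B beta delta iota alpha CD HB Hb0 Hd Hi Ha HCD.
    move=> /= -[_ H _]; apply: H.
    apply: mulr_gt0 => //; exact: mulr_gt0.
  + move=> C CD HC HCD Hne; have := @eps_props R B beta delta iota alpha C CD HB Hb0 Hd Hi Ha HC HCD.
    move=> /= -[_ H _]; apply: H.
    apply: mulr_gt0 => //.
    by case: (lt0_or HC HCD Hne) => H; nra.
- move=> V D HV HD _ z; exact: lastpart.
Qed.
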